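(* Let $\Gamma=(V,E)$ be a metric graph with $V=\{v_1,\dots,v_n\}$ and $E=\{e_1,\dots,e_m\}$, where $e_j$ has endpoints $v_{j(1)},v_{j(2)}$ ($1\le j(1),j(2)\le n$) and length $M_j>0$. Let $D$ be a vertex-supported divisor on $\Gamma$ with $d_i=D(v_i)$. Let $f$ be a rational function on $\Gamma$ with at most two linear pieces on each edge of $\Gamma$; write $a_i=f(v_i)$, and let $s_{j,1},s_{j,2}$ be the outgoing slopes of $f$ along $e_j$ at $v_{j(1)}$ and at $v_{j(2)}$ respectively. Then $f\in R(D)$ if and only if (a) for each $1\le i\le n$: $d_i+\sum_{j:\,j(1)=i}s_{j,1}+\sum_{j:\,j(2)=i}s_{j,2}\ge 0$; and (b) for each $1\le j\le m$, either $s_{j,1}+s_{j,2}=0$ and $a_{j(1)}-a_{j(2)}+s_{j,1}M_j=0$, or $s_{j,1}+s_{j,2}<0$ and $s_{j,2}M_j<a_{j(1)}-a_{j(2)}<-s_{j,1}M_j$.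
   Context: A metric graph is a connected undirected graph (loops and parallel edges allowed) whose edges have positive real lengths, each edge viewed as a real segment. A divisor is a finite formal $\mathbb{Z}$-combination of points of $\Gamma$; it is vertex-supported if its support is contained in $V$. A rational function is a continuous $f:\Gamma\to\mathbb{R}$, piecewise linear on each edge with finitely many pieces and integer slopes; $\mathrm{ord}_x(f)$ is the sum of the outgoing slopes of $f$ at $x$ over all directions, and $(f)=\sum_x\mathrm{ord}_x(f)x$. $R(D)$ is the set of rational functions $f$ such that $D+(f)$ is effective (all coefficients $\ge 0$). *)

(* Defs.v *)
From Stdlib Require Import ClassicalEpsilon.
From mathcomp Require Import all_boot all_order all_algebra.
From mathcomp Require Import reals.
Set Implicit Arguments. Unset Strict Implicit. Unset Printing Implicit Defensive.
Import Order.TTheory GRing.Theory Num.Theory.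
Local Open Scope ring_scope.

(* A metric graph: vertices 'I_nv, edges 'I_ne, edge j goes from src j to
   tgt j (loops and parallel edges allowed) and has length len j > 0.
   Edge j is identified with the segment [0, len j], 0 <-> src j. *)
Record mgraph (R : realType) := MGraph {
  nv : nat;
  ne : nat;
  src : 'I_ne -> 'I_nv;
  tgt : 'I_ne -> 'I_nv;
  len : 'I_ne -> R;
  len_gt0 : forall j, 0 < len j }.

Section MetricGraph.
Variables (R : realType) (G : mgraph R).

Definition adj : rel 'I_(nv G) := fun u v =>
  [exists j, ((src j == u) && (tgt j == v)) || ((src j == v) && (tgt j == u))].

Definition connected_mgraph : Prop := forall u v, connect adj u v.

(* Points of Gamma: vertices, and interior points (j, t) with 0 < t < len j. *)
Inductive point := Vtx of 'I_(nv G) | Inn of 'I_(ne G) & R.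

Definition valid_point (x : point) : Prop :=
  match x with Vtx _ => True | Inn j t => 0 < t < len j end.

Definition pt (j : 'I_(ne G)) (t : R) : point :=
  if t <= 0 then Vtx (src j) else if len j <= t then Vtx (tgt j) else Inn j t.

(* Divisors: Z-valued functions on points (finite support is automatic for
   vertex-supported ones, the only ones used here). *)
Definition divisor := point -> int.
Definition vertex_supported (D : divisor) : Prop := forall j t, D (Inn j t) = 0.

Definition edgef (f : point -> R) (j : 'I_(ne G)) : R -> R := fun t => f (pt j t).

Definition pl_pieces (g : R -> R) (L : R) (k : nat) : Prop :=
  exists (x : nat -> R) (sl : nat -> int),
    [/\ x 0%N = 0, x k = L, (forall l, (l < k)%N -> x l < x l.+1) &
        forall l, (l < k)%N -> forall t, x l <= t <= x l.+1 ->
          g t = g (x l) + (sl l)%:~R * (t - x l)].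

Definition rational_function (f : point -> R) : Prop :=
  forall j, exists k, pl_pieces (edgef f j) (len j) k.

Definition at_most_two_pieces (f : point -> R) : Prop :=
  forall j, exists k, (k <= 2)%N /\ pl_pieces (edgef f j) (len j) k.

(* outgoing slope of g at t in the positive direction (intrinsic; unique for
   piecewise linear g) *)
Definition rslope (g : R -> R) (t : R) : int :=
  epsilon (inhabits 0%R) (fun s : int => exists e : R, 0 < e /\
    forall h, 0 < h < e -> g (t + h) = g t + s%:~R * h).

Definition slope1 (f : point -> R) (j : 'I_(ne G)) : int := rslope (edgef f j) 0.
Definition slope2 (f : point -> R) (j : 'I_(ne G)) : int :=
  rslope (fun t => edgef f j (len j - t)) 0.

(* ord_x(f) : sum of the outgoing slopes of f at x over all directions *)
Definition ord (f : point -> R) (x : point) : int :=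
  match x with
  | Vtx i => \sum_(j | src j == i) slope1 f j + \sum_(j | tgt j == i) slope2 f j
  | Inn j t => rslope (edgef f j) t + rslope (fun u => edgef f j (t - u)) 0
  end.

Definition in_RD (D : divisor) (f : point -> R) : Prop :=
  forall x, valid_point x -> 0 <= D x + ord f x.

End MetricGraph.

(* Main.v *)
Require Import Defs.
From mathcomp Require Import all_boot all_order all_algebra.
From mathcomp Require Import reals.
From mathcomp Require Import ring lra.
From Stdlib Require Import ClassicalEpsilon.
Import Order.TTheory GRing.Theory Num.Theory.
Local Open Scope ring_scope.

Lemma rslope_eq (R : realType) (g : R -> R) t (s : int) e : 0 < e ->
  (forall h, 0 < h < e -> g (t+h) = g t + s%:~R * h) -> rslope g t = s.
Proof.
move=> e0 H; rewrite /rslope.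
have [e' [e'0 H']] := epsilon_spec (inhabits 0%R)
  (fun s' : int => exists e, 0 < e /\ forall h, 0 < h < e -> g (t+h) = g t + s'%:~R * h)
  (ex_intro _ s (ex_intro _ e (conj e0 H))).
set s' := epsilon _ _ in H' *.
have m0 : 0 < Num.min e e' by rewrite lt_min e0 e'0.
have me : Num.min e e' <= e by rewrite ge_min lexx.
have me' : Num.min e e' <= e' by rewrite ge_min lexx orbT.
set m := Num.min e e' in m0 me me'.
have h1 : 0 < m / 2 < e by apply/andP; split; lra.
have h2 : 0 < m / 2 < e' by apply/andP; split; lra.
have := H _ h1; rewrite H' // => /addrI /mulIf => E.
apply: intr_inj; apply: E; lra.
Qed.

Section Edge.
Variables (R : realType) (g : R -> R) (L p : R) (s0 s1 : int).
Hypotheses (p0 : 0 < p) (pL : p < L)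
  (H0 : forall t, 0 <= t <= p -> g t = g 0 + s0%:~R * t)
  (H1 : forall t, p <= t <= L -> g t = g p + s1%:~R * (t - p)).

Lemma r_lo t : 0 <= t < p -> rslope g t = s0.
Proof.
move=> /andP[t0 tp]; apply: (@rslope_eq _ _ _ _ (p - t)); first lra.
move=> h /andP[h0 hp]; rewrite H0; last (apply/andP; split; lra).
rewrite (H0 t); last (apply/andP; split; lra). ring.
Qed.

Lemma r_hi t : p <= t < L -> rslope g t = s1.
Proof.
move=> /andP[t0 tp]; apply: (@rslope_eq _ _ _ _ (L - t)); first lra.
move=> h /andP[h0 hp]; rewrite H1; last (apply/andP; split; lra).
rewrite (H1 t); last (apply/andP; split; lra). ring.
Qed.

Lemma l_lo t : 0 < t <= p -> rslope (fun u => g (t - u)) 0 = - s0.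
Proof.
move=> /andP[t0 tp]; apply: (@rslope_eq _ _ _ _ t) => // h /andP[h0 hp].
rewrite add0r subr0 H0; last (apply/andP; split; lra).
rewrite (H0 t); last (apply/andP; split; lra). rewrite intrN. ring.
Qed.

Lemma l_hi t : p < t <= L -> rslope (fun u => g (t - u)) 0 = - s1.
Proof.
move=> /andP[t0 tp]; apply: (@rslope_eq _ _ _ _ (t - p)); first lra.
move=> h /andP[h0 hp].
rewrite add0r subr0 H1; last (apply/andP; split; lra).
rewrite (H1 t); last (apply/andP; split; lra). rewrite intrN. ring.
Qed.

End Edge.

Lemma two_piece (R : realType) (g : R -> R) (L : R) k : 0 < L -> (k <= 2)%N ->
  pl_pieces g L k -> exists p (s0 s1 : int), [/\ 0 < p < L,
  (forall t, 0 <= t <= p -> g t = g 0 + s0%:~R * t) &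
  (forall t, p <= t <= L -> g t = g p + s1%:~R * (t - p))].
Proof.
move=> L0 k2 [x [sl [x0 xk inc H]]].
case: k k2 xk inc H => [|[|[|k]]] // _ xk inc H.
- by move: L0; rewrite -xk x0 ltxx.
- exists (L / 2), (sl 0%N), (sl 0%N); split.
  + apply/andP; split; lra.
  + move=> t /andP[t0 tL]; rewrite (H 0%N) // ?x0 ?subr0 //.
    rewrite xk; apply/andP; split; lra.
  + move=> t /andP[t0 tL].
    have Hg : forall u, 0 <= u <= L -> g u = g 0 + (sl 0%N)%:~R * u.
      by move=> u hu; rewrite (H 0%N) // ?x0 ?subr0 // xk.
    rewrite Hg; last (apply/andP; split; lra).
    rewrite (Hg (L/2)); last (apply/andP; split; lra). ring.
- exists (x 1%N), (sl 0%N), (sl 1%N); split.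
  + have := inc 0%N isT; have := inc 1%N isT; rewrite x0 xk => a b.
    by rewrite b a.
  + by move=> t ht; rewrite (H 0%N) // ?x0 ?subr0.
  + by move=> t ht; rewrite (H 1%N) // xk.
Qed.

Theorem lemma2p18 (R : realType) (G : mgraph R) (D : divisor G)
    (f : point G -> R) :
  connected_mgraph G ->
  vertex_supported D ->
  rational_function f ->
  at_most_two_pieces f ->
  in_RD D f <->
  ((forall i : 'I_(nv G),
      0 <= D (Vtx i) + \sum_(j | src j == i) slope1 f j
                       + \sum_(j | tgt j == i) slope2 f j) /\
   (forall j : 'I_(ne G),
      let a1 := f (Vtx (src j)) in
      let a2 := f (Vtx (tgt j)) in
      let s1 := slope1 f j in
      let s2 := slope2 f j in
      (s1 + s2 = 0 /\ a1 - a2 + s1%:~R * len j = 0) \/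
      (s1 + s2 < 0 /\ s2%:~R * len j < a1 - a2 < - s1%:~R * len j))).
Proof.
move=> _ HD _ H2.
have E : forall j, exists p (s0 s1 : int), [/\ 0 < p < len j,
  (forall t, 0 <= t <= p -> edgef f j t = edgef f j 0 + s0%:~R * t) &
  (forall t, p <= t <= len j -> edgef f j t = edgef f j p + s1%:~R * (t - p))].
  by move=> j; have [k [k2 hk]] := H2 j; apply: two_piece hk => //; apply: len_gt0.
have V0 : forall j, edgef f j 0 = f (Vtx (src j)) by move=> j; rewrite /edgef /pt lexx.
have VL : forall j, edgef f j (len j) = f (Vtx (tgt j)).
  by move=> j; rewrite /edgef /pt leNgt len_gt0 /= lexx.
have S1 : forall j p (s0 s1 : int), 0 < p < len j ->
  (forall t, 0 <= t <= p -> edgef f j t = edgef f j 0 + s0%:~R * t) ->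
  slope1 f j = s0.
  move=> j p s0 s1 /andP[p0 pL] h0; rewrite /slope1.
  apply: (@r_lo _ _ p s0 h0); by rewrite lexx p0.
have S2 : forall j p (s0 s1 : int), 0 < p < len j ->
  (forall t, p <= t <= len j -> edgef f j t = edgef f j p + s1%:~R * (t - p)) ->
  slope2 f j = - s1.
  move=> j p s0 s1 /andP[p0 pL] h1; rewrite /slope2.
  apply: (@l_hi _ _ (len j) p s1 h1); by rewrite pL lexx.
split.
- move=> H; split.
  + move=> i; have := H (Vtx i) I; by rewrite /= addrA.
  + move=> j a1 a2 s1' s2'.
    have [p [s0 [s1 [hp h0 h1]]]] := E j.
    have e1 : s1' = s0 by apply: S1 hp h0.
    have e2 : s2' = - s1 by apply: S2 hp h1.
    have := H (Inn j p) hp; rewrite /= HD add0r.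
    case/andP: hp => p0 pL.
    rewrite (@r_hi _ _ (len j) p s1 h1 p); last by rewrite lexx pL.
    rewrite (@l_lo _ _ p s0 h0 p); last by rewrite lexx p0.
    rewrite subr_ge0 le_eqVlt => /orP[/eqP es|lt].
    * left; rewrite e1 e2 es subrr; split => //.
      rewrite /a1 /a2 -V0 -VL (h1 (len j)); last by rewrite lexx (ltW pL).
      rewrite (h0 p); last by rewrite lexx (ltW p0).
      rewrite es; ring.
    * right; rewrite e1 e2 subr_lt0 lt; split => //.
      rewrite /a1 /a2 -V0 -VL (h1 (len j)); last by rewrite lexx (ltW pL).
      rewrite (h0 p); last by rewrite lexx (ltW p0).
      have : s0%:~R < s1%:~R :> R by rewrite ltr_int.
      move=> lt'; rewrite intrN.
      have q1 : 0 < (s1%:~R - s0%:~R) * p :> R by apply: mulr_gt0; lra.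
      have q2 : 0 < (s1%:~R - s0%:~R) * (len j - p) :> R by apply: mulr_gt0; lra.
      apply/andP; split; lra.
- case=> Ha Hb [i|j t] /=.
  + by move=> _; rewrite addrA.
  + move=> ht; rewrite HD add0r.
    have [p [s0 [s1 [hp h0 h1]]]] := E j.
    have e1 := S1 _ _ _ s1 hp h0.
    have e2 := S2 _ _ s0 _ hp h1.
    case/andP: hp => p0 pL; case/andP: ht => t0 tL.
    have [tp|pt|->] := ltgtP t p.
    * rewrite (@r_lo _ _ p s0 h0 t); last by rewrite (ltW t0) tp.
      rewrite (@l_lo _ _ p s0 h0 t); last by rewrite (ltW tp) t0.
      by rewrite subrr.
    * rewrite (@r_hi _ _ (len j) p s1 h1 t); last by rewrite (ltW pt) tL.
      rewrite (@l_hi _ _ (len j) p s1 h1 t); last by rewrite (ltW tL) pt.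
      by rewrite subrr.
    * rewrite (@r_hi _ _ (len j) p s1 h1 p); last by rewrite lexx pL.
      rewrite (@l_lo _ _ p s0 h0 p); last by rewrite lexx p0.
      have := Hb j; rewrite e1 e2 /= => [[[e _]|[e _]]].
      - by rewrite -opprB (_ : s0 - s1 = 0) ?oppr0 // -e.
      - by rewrite -opprB oppr_ge0 ltW.
Qed.
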